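(* Let $X$ be a Banach lattice that has a quasi-interior point, and let $P\colon X\to X$ be a positive projection satisfying $\alpha\,\mathrm{id}_X\le P$ for some $\alpha>0$. If $B\subseteq X$ is a projection band with $P(B)\subseteq B$, then its disjoint complement $B^d$ also satisfies $P(B^d)\subseteq B^d$.
   Context: A quasi-interior point of $X$ is an element $e\in X_+$ whose generated ideal is norm dense in $X$. A positive projection is a linear $P$ with $P^2=P$ and $P(X_+)\subseteq X_+$. $\alpha\,\mathrm{id}_X\le P$ means $Px\ge\alpha x$ for all $x\in X_+$. $B^d=\{x\in X: |x|\wedge|b|=0 \text{ for all } b\in B\}$. *)

(* Defs.v *)
From HB Require Import structures.
From mathcomp Require Import all_boot all_order all_algebra.
From mathcomp Require Import all_classical all_reals all_analysis.
Set Implicit Arguments. Unset Strict Implicit. Unset Printing Implicit Defensive.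
Import Order.TTheory GRing.Theory Num.Theory.
Import numFieldNormedType.Exports.
Local Open Scope classical_set_scope.
Local Open Scope ring_scope.

Section BanachLattice.
Variables (R : realType) (V : completeNormedModType R).
Variables (le : V -> V -> Prop) (join : V -> V -> V).

Definition is_sup2 (x y z : V) : Prop :=
  le x z /\ le y z /\ forall w, le x w -> le y w -> le z w.

Definition is_supset (D : set V) (z : V) : Prop :=
  (forall d, D d -> le d z) /\ (forall w, (forall d, D d -> le d w) -> le z w).

Definition lat_abs (x : V) : V := join x (- x).
Definition lat_meet (x y : V) : V := - join (- x) (- y).

Definition banach_lattice : Prop :=
  (forall x, le x x) /\
  (forall x y, le x y -> le y x -> x = y) /\
  (forall x y z, le x y -> le y z -> le x z) /\
  (forall x y z, le x y -> le (x + z) (y + z)) /\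
  (forall (a : R) x y, 0 <= a -> le x y -> le (a *: x) (a *: y)) /\
  (forall x y, is_sup2 x y (join x y)) /\
  (forall x y, le (lat_abs x) (lat_abs y) -> `|x| <= `|y|).

Definition positive_cone : set V := [set x | le 0 x].

Definition principal_ideal (e : V) : set V :=
  [set x | exists n : nat, le (lat_abs x) (n%:R *: e)].

Definition quasi_interior_point (e : V) : Prop :=
  le 0 e /\ closure (principal_ideal e) = setT.

Definition disjoint_complement (B : set V) : set V :=
  [set x | forall b, B b -> lat_meet (lat_abs x) (lat_abs b) = 0].

Definition is_ideal (B : set V) : Prop :=
  [/\ B 0, (forall x y, B x -> B y -> B (x + y)),
      (forall (a : R) x, B x -> B (a *: x)) &
      (forall x y, B y -> le (lat_abs x) (lat_abs y) -> B x)].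

Definition is_band (B : set V) : Prop :=
  is_ideal B /\ (forall D z, D `<=` B -> is_supset D z -> B z).

Definition projection_band (B : set V) : Prop :=
  is_band B /\
  forall x, exists b c, [/\ B b, disjoint_complement B c & x = b + c].

Definition positive_projection (P : V -> V) : Prop :=
  [/\ (forall (a : R) x y, P (a *: x + y) = a *: P x + P y),
      (forall x, P (P x) = P x) &
      (forall x, le 0 x -> le 0 (P x))].

End BanachLattice.

(* Main.v *)
Require Import Defs.
From HB Require Import structures.
From mathcomp Require Import all_boot all_order all_algebra.
From mathcomp Require Import all_classical all_reals all_analysis.
Import Order.TTheory GRing.Theory Num.Theory.
Import numFieldNormedType.Exports.
Local Open Scope classical_set_scope.
Local Open Scope ring_scope.

Theorem lemma2p3 (R : realType) (V : completeNormedModType R)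
    (le : V -> V -> Prop) (join : V -> V -> V)
    (HBL : banach_lattice le join)
    (Hqip : exists e : V, quasi_interior_point le join e)
    (P : V -> V) (HP : positive_projection le P)
    (alpha : R) (Halpha : 0 < alpha)
    (HaP : forall x, le 0 x -> le (alpha *: x) (P x))
    (B : set V) (HB : projection_band le join B)
    (HPB : forall x, B x -> B (P x)) :
  forall x, disjoint_complement join B x -> disjoint_complement join B (P x).
Proof.
case: HBL => [lrefl [lanti [ltrans [lD [lZ [lsup _]]]]]].
have leDl : forall x y z, le x y -> le (z + x) (z + y).
  by move=> x y z h; rewrite ![z + _]addrC; apply: lD.
have le2 : forall a b c d, le a b -> le c d -> le (a + c) (b + d).
  by move=> a b c d h1 h2; apply: (ltrans) (lD _ _ c h1) _; apply: leDl.
have leN : forall x y, le x y -> le (-y) (-x).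
  move=> u v h; have := lD _ _ (- u - v) h.
  by rewrite [u + _]addrA subrr add0r addrCA subrr addr0.
have mvL : forall u t v, le (u + t) v -> le u (v - t).
  by move=> u t v h; have := lD _ _ (-t) h; rewrite addrK.
have mvR : forall u t v, le u (v - t) -> le (u + t) v.
  by move=> u t v h; have := lD _ _ t h; rewrite subrK.
have jl : forall x y, le x (join x y) by move=> x y; case: (lsup x y).
have jr : forall x y, le y (join x y) by move=> x y; case: (lsup x y) => _ [].
have jlub : forall x y w, le x w -> le y w -> le (join x y) w.
  by move=> x y w; case: (lsup x y) => _ [_]; apply.
pose ab := lat_abs join. pose mt := lat_meet join.
have abl : forall x, le x (ab x) by move=> x; apply: jl.
have abr : forall x, le (-x) (ab x) by move=> x; apply: jr.
have ab0 : forall x, le 0 (ab x).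
  move=> x; have h := le2 _ _ _ _ (abl x) (abr x); rewrite subrr in h.
  have e2 : (2^-1 + 2^-1 : R) = 1 by rewrite [RHS](splitr 1) mul1r.
  have := lZ (2^-1) _ _ _ h; rewrite scaler0 scalerDr -scalerDl e2 scale1r.
  by apply; rewrite invr_ge0.
have abpos : forall a, le 0 a -> ab a = a.
  move=> a h; apply: lanti; last exact: abl.
  apply: jlub; first exact: lrefl.
  by apply: (ltrans) (leN _ _ h) _; rewrite oppr0.
have abN : forall x, ab (- x) = ab x.
  move=> x; apply: lanti; apply: jlub.
  - exact: abr.
  - by rewrite opprK; apply: abl.
  - by rewrite -{1}(opprK x); apply: abr.
  - exact: abl.
have abD : forall u v, le (ab (u + v)) (ab u + ab v).
  move=> u v; apply: jlub; first by apply: le2.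
  by rewrite opprD; apply: le2.
have mtl : forall x y, le (mt x y) x.
  by move=> x y; rewrite -{2}(opprK x); apply: leN; apply: jl.
have mtr : forall x y, le (mt x y) y.
  by move=> x y; rewrite -{2}(opprK y); apply: leN; apply: jr.
have mtg : forall x y z, le z x -> le z y -> le z (mt x y).
  move=> x y z h1 h2; rewrite -(opprK z); apply: (leN).
  by apply: jlub; apply: leN.
have mt0 : forall a b, le 0 a -> le 0 b -> le 0 (mt a b).
  by move=> a b h1 h2; apply: mtg.
have mtmono : forall a a' b, le a a' -> le (mt a b) (mt a' b).
  by move=> a a' b h; apply: mtg; [apply: (ltrans) h; apply: mtl | apply: mtr].
have riesz : forall a b w, le 0 a -> le 0 b -> le 0 w ->
    le (mt (a + b) w) (mt a w + mt b w).
  move=> a b w ha hb hw; set z := mt (a + b) w.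
  have hza : le z (a + b) by apply: mtl.
  have hzw : le z w by apply: mtr.
  suff h : le (z - mt a w) (mt b w).
    by have := lD _ _ (mt a w) h; rewrite subrK addrC.
  have -> : z - mt a w = join (- a) (- w) + z by rewrite /mt /lat_meet opprK addrC.
  apply: (mtg); apply: (mvR); apply: (jlub); apply: (mvL).
  - have := lD _ _ (-a) hza; rewrite [a + b]addrC addrK addrC; exact.
  - apply: (ltrans) (hb); have := lD _ _ (-w) hzw; rewrite subrr addrC; exact.
  - apply: (ltrans) (hzw); have := lD _ _ z (leN _ _ ha); rewrite oppr0 add0r; exact.
  - apply: (ltrans) (hw); have := leDl _ _ (-w) hzw; rewrite addNr; exact.
case: HB => [[[B0 BD BZ Bsol] _] Bdec].
pose Bd := disjoint_complement join B.
have Bde : forall c b, Bd c -> B b -> mt (ab c) (ab b) = 0 by move=> c b h; apply: h.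
have Bdsol : forall c u, Bd c -> le (ab u) (ab c) -> Bd u.
  move=> c u hc h b hb; apply: lanti; last by apply: mt0; apply: ab0.
  apply: (ltrans) (mtmono _ _ _ h) _; rewrite (Bde c b hc hb); exact: lrefl.
have BdD : forall c1 c2, Bd c1 -> Bd c2 -> Bd (c1 + c2).
  move=> c1 c2 h1 h2 b hb; apply: lanti; last by apply: mt0; apply: ab0.
  apply: (ltrans) (mtmono _ _ _ (abD c1 c2)) _.
  apply: (ltrans) (riesz _ _ _ (ab0 _) (ab0 _) (ab0 _)) _.
  rewrite (Bde c1 b h1 hb) (Bde c2 b h2 hb) addr0; exact: lrefl.
have BdN : forall c, Bd c -> Bd (- c).
  by move=> c h; apply: (Bdsol c) => //; rewrite abN; apply: lrefl.
have scmono : forall (s t : R) u, 0 <= s -> s <= t -> le 0 u -> le (s *: u) (t *: u).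
  move=> s t u hs hst hu; have := lZ (t - s) _ _ _ hu; rewrite scaler0 subr_ge0 => /(_ hst) h.
  by have := leDl _ _ (s *: u) h; rewrite addr0 -scalerDl subrKC.
have Bdsc : forall (s : R) c, 0 <= s -> s <= 1 -> Bd c -> Bd (s *: c).
  move=> s c hs hs1 hc; apply: (Bdsol c) => //; apply: (jlub).
  - apply: (ltrans) (lZ _ _ _ hs (abl c)) _; rewrite -{2}(scale1r (ab c)).
    by apply: scmono => //; apply: ab0.
  - rewrite -scalerN; apply: (ltrans) (lZ _ _ _ hs (abr c)) _; rewrite -{2}(scale1r (ab c)).
    by apply: scmono => //; apply: ab0.
have BN : forall b, B b -> B (- b) by move=> b h; rewrite -scaleN1r; apply: BZ.
have BBd0 : forall u, B u -> Bd u -> u = 0.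
  move=> u hB hBd; have h := Bde u u hBd hB.
  have h1 : le (ab u) 0 by rewrite -h; apply: mtg; apply: lrefl.
  apply: lanti; first by apply: (ltrans) h1; apply: abl.
  rewrite -oppr0 -(opprK u); apply: leN; apply: (ltrans) h1; apply: abr.
have uniq2 : forall b1 c1 b2 c2, B b1 -> Bd c1 -> B b2 -> Bd c2 ->
    b1 + c1 = b2 + c2 -> b1 = b2 /\ c1 = c2.
  move=> b1 c1 b2 c2 hb1 hc1 hb2 hc2 e.
  have e2 : b1 - b2 = c2 - c1.
    by rewrite -[b1](addrK c1) e addrAC [b2 + c2]addrC addrK.
  have : b1 - b2 = 0 by apply: BBd0; [apply: BD => //; apply: BN | rewrite e2; apply: BdD => //; apply: BdN].
  move/eqP; rewrite subr_eq0 => /eqP eb; split => //.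
  by move: e; rewrite eb => /addrI.
have posN : forall u v, le 0 (u + v) -> le (- u) v.
  by move=> u v h; have := lD _ _ (-u) h; rewrite add0r addrC addKr.
have pos : forall b c, B b -> Bd c -> le 0 (b + c) -> le 0 b /\ le 0 c.
  move=> b c hb hc h; split.
  - pose n := join (- b) 0.
    have n0 : le 0 n by apply: jr.
    have Bn : B n by apply: (Bsol n b) => //; change (le (ab n) (ab b)); rewrite (abpos n n0); apply: jlub; [apply: abr | apply: ab0].
    have hm := Bde c n hc Bn; rewrite (abpos n n0) in hm.
    have hn : le n 0.
      rewrite -hm; apply: (mtg); last by apply: lrefl.
      apply: jlub; last by apply: ab0.
      by apply: (ltrans) (abl c); apply: posN.
    rewrite -oppr0 -(opprK b); apply: leN; apply: (ltrans) hn; apply: jl.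
  - pose n := join (- c) 0.
    have n0 : le 0 n by apply: jr.
    have Bdn : Bd n by apply: (Bdsol c) => //; rewrite (abpos n n0); apply: jlub; [apply: abr | apply: ab0].
    have hm := Bde n b Bdn hb; rewrite (abpos n n0) in hm.
    have hn : le n 0.
      rewrite -hm; apply: mtg; first by apply: lrefl.
      apply: jlub; last by apply: ab0.
      by apply: (ltrans) (abl b); apply: posN; rewrite addrC.
    rewrite -oppr0 -(opprK c); apply: leN; apply: (ltrans) hn; apply: jl.
case: HP => [Plin Pid Ppos].
have PD : forall u v, P (u + v) = P u + P v.
  by move=> u v; have := Plin 1 u v; rewrite !scale1r.
have P0 : P 0 = 0.
  by have := Plin (-1) 0 0; rewrite scaler0 add0r scaleN1r addNr.
have PN : forall u, P (- u) = - P u.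
  by move=> u; have := Plin (-1) u 0; rewrite !addr0 P0 !scaleN1r addr0.
have PZ : forall (s : R) u, P (s *: u) = s *: P u.
  by move=> s u; have := Plin s u 0; rewrite !addr0 P0 addr0.
pose a := Num.min alpha 1.
have a0 : 0 < a by rewrite lt_min Halpha ltr01.
have a1 : a <= 1 by rewrite ge_min lexx orbT.
have HaP' : forall u, le 0 u -> le (a *: u) (P u).
  move=> u hu; apply: (ltrans) (HaP u hu).
  by apply: scmono => //; [exact: (ltW a0) | rewrite ge_min lexx].
have sc0 : forall u, le (a *: u) 0 -> le 0 u -> u = 0.
  move=> u h1 h2; have : a *: u = 0.
    by apply: lanti => //; rewrite -(scaler0 _ a); apply: lZ => //; exact: (ltW a0).
  by move/eqP; rewrite scaler_eq0 (gt_eqF a0) /= => /eqP.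
have mainpos : forall y, le 0 y -> Bd y -> Bd (P y).
  move=> y y0 Bdy.
  have Py0 : le 0 (P y).
    apply: (ltrans) (HaP' y y0); rewrite -(scaler0 _ a); apply: lZ => //; exact: (ltW a0).
  have [b [c [hb hc e]]] := Bdec (P y).
  have [b0 c0] := pos b c hb hc (eq_ind _ (le 0) Py0 _ e).
  have [b' [c' [hb' hc' e']]] := Bdec (P c).
  have [eb ec] : P b + b' = b /\ c' = c.
    apply: uniq2 => //; first by apply: BD => //; apply: HPB.
    by rewrite -addrA -e' -PD -e Pid.
  rewrite ec in e' hc'.
  have Pc0 : le 0 (P c) by apply: Ppos.
  have [b'0 _] := pos b' c hb' hc (eq_ind _ (le 0) Pc0 _ e').
  have Pb' : P b' = 0.
    have h := Pid c; rewrite {1}e' PD in h.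
    by apply: (addIr (P c)); rewrite add0r.
  have eb' : b' = 0 by apply: sc0 => //; rewrite -Pb'; apply: HaP'.
  rewrite eb' add0r in e'.
  have hd : le 0 (c - a *: y).
    have hBd : Bd (c - a *: y) by apply: BdD => //; apply: BdN; apply: Bdsc => //; exact: (ltW a0).
    case: (pos b _ hb hBd) => //; rewrite addrA -e.
    by have := lD _ _ (-(a *: y)) (HaP' y y0); rewrite subrr.
  have := Ppos _ hd; rewrite PD PN PZ e' e.
  have -> : c - a *: (b + c) = - (a *: b) + (c - a *: c) by rewrite scalerDr opprD addrCA.
  move=> h2.
  have [h3 _] := pos _ _ (BN _ (BZ a b hb)) (BdD _ _ hc (BdN _ (Bdsc a c (ltW a0) a1 hc))) h2.
  have eb0 : b = 0.
    apply: sc0 => //; rewrite -oppr0 -(opprK (a *: b)); exact: leN.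
  by rewrite eb0 add0r.
move=> x Bdx.
have Bdax : Bd (ab x) by apply: (Bdsol x) => //; change (le (ab (ab x)) (ab x)); rewrite (abpos _ (ab0 x)); exact: lrefl.
have hx0 : le 0 (x + ab x).
  by have := lD _ _ x (abr x); rewrite addNr addrC.
have -> : P x = P (x + ab x) + - P (ab x) by rewrite -PN -PD addrK.
apply: (BdD); last apply: BdN; apply: mainpos => //.
exact: BdD.
Qed.
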